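(* Let $T$ be a finite rooted tree with root $\omega$ having $k\ge 1$ children. Partition the $k$ subtrees rooted at the children of $\omega$ into classes of pairwise isomorphic (rooted) subtrees; let $t$ be the number of classes, $k_i$ the number of subtrees in the $i$-th class, $T_i$ a representative of the $i$-th class, and $A_i$ the automorphism group of the rooted tree $T_i$ ($1\le i\le t$). If a finite group $G$ is representable on $T$, then there exists $1\le i\le t$ and a nontrivial homomorphism from $G$ to $W_{k_i}(A_i)$.
   Context: The automorphism group of a rooted tree is the group of tree automorphisms fixing the root; $G$ is representable on a rooted tree if there is a nontrivial homomorphism from $G$ to its automorphism group. For a group $A$ and $n\ge1$, $W_n(A)$ is the wreath product $S_n\wr A$, i.e. the semidirect product $A^n\rtimes S_n$ in which $S_n$ acts on the direct product $A^n$ by permuting coordinates. *)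

(* Defs.v *)
From mathcomp Require Import all_boot all_fingroup.
Set Implicit Arguments. Unset Strict Implicit. Unset Printing Implicit Defensive.
Local Open Scope group_scope.

Section Trees.
Variable V : finType.

(* A finite rooted tree on vertex set V: root r, parent map with parent r = r,
   and every vertex reaches the root by iterating parent. Edges are {v, parent v}, v <> r. *)
Definition is_rooted_tree (r : V) (parent : V -> V) : Prop :=
  parent r = r /\ forall v, exists n, iter n parent v = r.

Definition adj (parent : V -> V) (x y : V) : bool :=
  (x != y) && ((parent x == y) || (parent y == x)).

Definition subtree (parent : V -> V) (c : V) : {set V} :=
  [set v | [exists n : 'I_#|V|, iter n parent v == c]].

Definition is_child (r : V) (parent : V -> V) (c : V) : bool :=
  (c != r) && (parent c == r).

Definition tree_aut (r : V) (parent : V -> V) : {set {perm V}} :=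
  [set p : {perm V} | (p r == r) &&
     [forall x, forall y, adj parent (p x) (p y) == adj parent x y]].

(* automorphism group of the rooted subtree T_c, realised as the permutations of V
   supported on subtree c, fixing c and preserving adjacency inside subtree c *)
Definition subtree_aut (parent : V -> V) (c : V) : {set {perm V}} :=
  [set p : {perm V} | [&& p c == c,
     [forall x, (x \notin subtree parent c) ==> (p x == x)] &
     [forall x in subtree parent c, forall y in subtree parent c,
        adj parent (p x) (p y) == adj parent x y]]].

Definition subtree_iso (parent : V -> V) (c c' : V) : bool :=
  [exists f : {ffun V -> V},
    [&& [forall x in subtree parent c, forall y in subtree parent c,
           (f x == f y) ==> (x == y)],
        f @: subtree parent c == subtree parent c',
        f c == c' &
        [forall x in subtree parent c, forall y in subtree parent c,
           adj parent (f x) (f y) == adj parent x y]]].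

Definition class_size (r : V) (parent : V -> V) (c : V) : nat :=
  #|[set c' | is_child r parent c' && subtree_iso parent c c']|.

End Trees.

Definition is_hom_on (gT hT : finGroupType) (G : {group gT}) (H : {set hT})
  (phi : gT -> hT) : Prop :=
  {in G, forall x, phi x \in H} /\ {in G &, {morph phi : x y / x * y}}.

Definition nontrivial_on (gT : finGroupType) (T : Type) (G : {group gT})
  (one : T) (phi : gT -> T) : Prop :=
  exists2 x, x \in G & phi x <> one.

Definition representable (gT : finGroupType) (G : {group gT})
  (V : finType) (r : V) (parent : V -> V) : Prop :=
  exists phi : gT -> {perm V},
    is_hom_on G (tree_aut r parent) phi /\ nontrivial_on G 1 phi.

(* Wreath product W_n(A) = A^n ⋊ S_n, A a subgroup of a finGroupType aT.
   Elements are pairs (f, s); S_n acts by permuting coordinates: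
   (f, s) * (g, t) = (i |-> f i * g (s i), s * t). *)
Definition wr_elt (aT : finGroupType) (n : nat) : Type :=
  ({ffun 'I_n -> aT} * {perm 'I_n})%type.

Definition wr_mul (aT : finGroupType) (n : nat) (u v : wr_elt aT n) : wr_elt aT n :=
  ([ffun i => u.1 i * v.1 (u.2 i)], u.2 * v.2).

Definition wr_one (aT : finGroupType) (n : nat) : wr_elt aT n :=
  ([ffun _ => 1], 1).

Definition nontrivial_hom_to_wreath (gT aT : finGroupType) (G : {group gT})
  (n : nat) (A : {set aT}) (phi : gT -> wr_elt aT n) : Prop :=
  [/\ {in G, forall x, forall i, (phi x).1 i \in A},
      {in G &, forall x y, phi (x * y) = wr_mul (phi x) (phi y)} &
      nontrivial_on G (wr_one aT n) phi].

(* Main.v *)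
Require Import Defs.
From mathcomp Require Import all_boot all_fingroup.
From mathcomp Require Import zify.
From Stdlib Require Import Classical.
Set Implicit Arguments. Unset Strict Implicit. Unset Printing Implicit Defensive.

Section Tree.
Variable V : finType.
Variables (r : V) (parent : V -> V).
Hypothesis Htree : is_rooted_tree r parent.

Lemma par_r : parent r = r. Proof. by case: Htree. Qed.
Lemma exd v : exists n, iter n parent v == r.
Proof. by case: Htree => _ /(_ v) [n Hn]; exists n; apply/eqP. Qed.
Definition depth v := ex_minn (exd v).
Lemma depthP v : iter (depth v) parent v = r.
Proof. rewrite /depth; case: ex_minnP => m /eqP Hm _; exact Hm. Qed.
Lemma depth_min v n : iter n parent v = r -> depth v <= n.
Proof. rewrite /depth; case: ex_minnP => m _ Hmin H; apply Hmin; exact/eqP. Qed.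
Lemma depth_r : depth r = 0.
Proof. apply/eqP; rewrite -leqn0; exact: depth_min. Qed.
Lemma depth0 v : depth v = 0 -> v = r.
Proof. move=> H; have := depthP v; by rewrite H. Qed.
Lemma depth_par v : v != r -> depth v = (depth (parent v)).+1.
Proof.
move=> Hv; apply/eqP; rewrite eqn_leq; apply/andP; split.
  apply: depth_min; rewrite iterSr; exact: depthP.
case E: (depth v) => [|m].
  by move: Hv; rewrite (depth0 E) eqxx.
rewrite ltnS; apply: depth_min. have := depthP v; by rewrite E iterSr.
Qed.

Lemma adj_depth x y : adj parent x y ->
  (parent x = y /\ depth x = (depth y).+1) \/ (parent y = x /\ depth y = (depth x).+1).
Proof.
case/andP=> Hxy /orP [/eqP H|/eqP H].
  left; split => //; rewrite -H depth_par //; apply/eqP => Hx.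
  by move: Hxy; rewrite -H Hx par_r eqxx.
right; split => //; rewrite -H depth_par //; apply/eqP => Hx.
by move: Hxy; rewrite -H Hx par_r eqxx.
Qed.

Lemma adj_par v : v != r -> adj parent v (parent v).
Proof.
move=> Hvr; have Hu := depth_par Hvr. rewrite /adj eqxx /= andbT.
apply/eqP => E. rewrite -E in Hu. lia.
Qed.

Lemma autP p : p \in tree_aut r parent ->
  p r = r /\ forall x y, adj parent (p x) (p y) = adj parent x y.
Proof.
rewrite inE => /andP [/eqP H1 /forallP H2]; split => // x y.
exact/eqP/(forallP (H2 x) y).
Qed.

Lemma autV p : p \in tree_aut r parent -> (p^-1)%g \in tree_aut r parent.
Proof.
move=> /autP [H1 H2]; rewrite inE; apply/andP; split.
  by rewrite -{1}H1 permK.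
apply/forallP => x; apply/forallP => y; apply/eqP.
by rewrite -H2 !permKV.
Qed.

Lemma aut_depth n : forall p v, p \in tree_aut r parent -> depth v <= n ->
  depth (p v) = depth v.
Proof.
elim: n => [|n IH] p v Hp Hv.
  move: Hv; rewrite leqn0 => /eqP /depth0 ->. by case: (autP Hp) => -> _.
case: (leqP (depth v) n) => Hvn; first exact: IH.
have Ev : depth v = n.+1 by apply/eqP; rewrite eqn_leq Hv Hvn.
have Hvr : v != r by apply/eqP => E; move: Ev; rewrite E depth_r.
have Hu := depth_par Hvr.
have Hun : depth (parent v) = n by lia.
have Hadj : adj parent (p v) (p (parent v)) by rewrite (autP Hp).2 adj_par.
have Hpu : depth (p (parent v)) = n by rewrite IH // Hun.
case: (adj_depth Hadj) => [[_ E]|[_ E]]; first by lia.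
have Hle : depth (p v) <= n by lia.
have := IH _ _ (autV Hp) Hle. rewrite permK. lia.
Qed.

Lemma aut_par p v : p \in tree_aut r parent -> p (parent v) = parent (p v).
Proof.
move=> Hp; have [H1 H2] := autP Hp.
have Hd w : depth (p w) = depth w := @aut_depth (depth w) p w Hp (leqnn _).
case: (eqVneq v r) => [->|Hvr]; first by rewrite par_r H1 par_r.
have Hu := depth_par Hvr.
have Hadj : adj parent (p v) (p (parent v)) by rewrite H2 adj_par.
case: (adj_depth Hadj) => [[E _]|[_ E]]; first by [].
rewrite !Hd in E; lia.
Qed.

Lemma aut_iter p v n : p \in tree_aut r parent ->
  p (iter n parent v) = iter n parent (p v).
Proof. move=> Hp; elim: n => //= n IH; by rewrite (aut_par _ Hp) IH. Qed.

Lemma aut_sub p c v : p \in tree_aut r parent ->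
  (p v \in subtree parent (p c)) = (v \in subtree parent c).
Proof.
move=> Hp.
have H q w d : q \in tree_aut r parent -> w \in subtree parent d ->
    q w \in subtree parent (q d).
  move=> Hq; rewrite !inE => /existsP [n /eqP Hn]; apply/existsP; exists n.
  by rewrite -aut_iter // Hn.
apply/idP/idP; last exact: H.
by move=> /(H _ _ _ (autV Hp)); rewrite !permK.
Qed.

Lemma sub_self c : c \in subtree parent c.
Proof.
have H0 : 0 < #|V| by apply/card_gt0P; exists c.
rewrite inE; apply/existsP; exists (Ordinal H0); by rewrite /= eqxx.
Qed.

Lemma depth_iter v i : i <= depth v -> depth (iter i parent v) = depth v - i.
Proof.
elim: i => [|i IH] Hi; first by rewrite subn0.
have Hw := IH (ltnW Hi).
have Hwr : iter i parent v != r by apply/eqP => E; move: Hw; rewrite E depth_r; lia.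
have := depth_par Hwr; rewrite /= Hw; lia.
Qed.

Lemma depth_lt v : depth v < #|V|.
Proof.
have Hf : injective (fun i : 'I_(depth v).+1 => iter i parent v).
  move=> i j E; have Hi : i <= depth v by rewrite -ltnS.
  have Hj : j <= depth v by rewrite -ltnS.
  move: (congr1 depth E); rewrite !depth_iter // => E2.
  apply: val_inj => /=; lia.
have := leq_card _ Hf; by rewrite card_ord.
Qed.

Lemma iso_refl c : subtree_iso parent c c.
Proof.
apply/existsP; exists [ffun v => v]; apply/and4P; split.
- apply/forallP => x; apply/implyP => _; apply/forallP => y; apply/implyP => _.
  by rewrite !ffunE; apply/implyP.
- apply/eqP/setP => w; apply/imsetP/idP => [[u Hu ->]|Hw]; first by rewrite ffunE.
  by exists w; rewrite ?ffunE.
- by rewrite ffunE.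
- apply/forallP => x; apply/implyP => _; apply/forallP => y; apply/implyP => _.
  by rewrite !ffunE.
Qed.

Lemma aut_img p c : p \in tree_aut r parent ->
  p @: subtree parent c = subtree parent (p c).
Proof.
move=> Hp; apply/setP => w; apply/imsetP/idP => [[u Hu ->]|Hw].
  by rewrite aut_sub.
exists ((p^-1)%g w); last by rewrite permKV.
by rewrite -(aut_sub _ _ Hp) permKV.
Qed.

Lemma iso_aut p c c' : p \in tree_aut r parent -> subtree_iso parent c c' ->
  subtree_iso parent c (p c').
Proof.
move=> Hp /existsP [f /and4P [Hinj Him Hfc Hadj]].
apply/existsP; exists [ffun v => p (f v)]; apply/and4P; split.
- apply/forallP => x; apply/implyP => Hx; apply/forallP => y; apply/implyP => Hy.
  rewrite !ffunE (inj_eq (@perm_inj _ p)).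
  exact: (implyP (forallP (implyP (forallP Hinj x) Hx) y) Hy).
- have -> : [ffun v => p (f v)] @: subtree parent c = p @: (f @: subtree parent c).
    by rewrite -imset_comp; apply: eq_imset => v; rewrite ffunE.
  by rewrite (eqP Him) aut_img.
- by rewrite ffunE (eqP Hfc).
- apply/forallP => x; apply/implyP => Hx; apply/forallP => y; apply/implyP => Hy.
  rewrite !ffunE (autP Hp).2.
  exact: (implyP (forallP (implyP (forallP Hadj x) Hx) y) Hy).
Qed.

Lemma sub_aut1 c : (1%g : {perm V}) \in subtree_aut parent c.
Proof.
rewrite inE perm1 eqxx /=; apply/andP; split.
  by apply/forallP => x; rewrite perm1 eqxx implybT.
apply/forallP => x; apply/implyP => _; apply/forallP => y; apply/implyP => _.
by rewrite !perm1.
Qed.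


Lemma main_sec (gT : finGroupType) (G : {group gT}) :
  (exists c, is_child r parent c) ->
  representable G r parent ->
  exists c, is_child r parent c /\
    exists phi : gT -> @wr_elt (perm_of V) (class_size r parent c),
      nontrivial_hom_to_wreath G (subtree_aut parent c) phi.
Proof.
move=> [c0 Hc0] [phi [[Hin Hmor] [x0 Hx0 Hne]]].
have child_aut y c : y \in G -> is_child r parent c -> is_child r parent (phi y c).
  move=> Hy /andP [Hcr /eqP Hpc]; have Hp := Hin y Hy.
  rewrite /is_child -(aut_par _ Hp) Hpc (autP Hp).1 eqxx andbT.
  by rewrite -{1}(autP Hp).1 (inj_eq (@perm_inj _ _)).
case: (classic (exists x c, [/\ x \in G, is_child r parent c & phi x c != c])).
- case=> x [c [HxG Hc Hxc]].
  exists c; split => //.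
  set C := [set c' | is_child r parent c' && subtree_iso parent c c'].
  have HcC : c \in C by rewrite inE Hc iso_refl.
  have HC y c' : y \in G -> c' \in C -> phi y c' \in C.
    move=> Hy; rewrite !inE => /andP [H1 H2].
    by rewrite child_aut // iso_aut // Hin.
  pose sig y (i : 'I_#|C|) :=
    if y \in G then enum_rank_in HcC (phi y (enum_val i)) else i.
  have sig_inj y : injective (sig y).
    move=> i j; rewrite /sig; case: ifP => Hy // E.
    apply: enum_val_inj; apply: (@perm_inj _ (phi y)).
    by rewrite -(enum_rankK_in HcC (HC _ _ Hy (enum_valP i))) E
       (enum_rankK_in HcC (HC _ _ Hy (enum_valP j))).
  pose sigma y := perm (sig_inj y).
  pose Phi y : @wr_elt (perm_of V) #|C| := ([ffun _ => 1%g], sigma y).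
  exists Phi; split.
  + by move=> y Hy i; rewrite ffunE sub_aut1.
  + move=> y z Hy Hz; rewrite /wr_mul /=; congr (_, _).
      by apply/ffunP => i; rewrite !ffunE mulg1.
    apply/permP => i; rewrite permM !permE /sig groupM // Hy Hz Hmor //.
    by rewrite permM (enum_rankK_in HcC (HC _ _ Hy (enum_valP i))).
  + exists x => //; move/(congr1 snd) => /= /permP /(_ (enum_rank_in HcC c)).
    rewrite permE perm1 /sig HxG => /(congr1 enum_val).
    rewrite !enum_rankK_in // ?HC // => E; by rewrite E eqxx in Hxc.
- move=> HB.
  have Hfix y c : y \in G -> is_child r parent c -> phi y c = c.
    move=> Hy Hc; apply/eqP; apply/negPn/negP => H; apply HB; by exists y, c.
  case: (pickP (fun v => phi x0 v != v)) => [v Hv|H]; last first.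
    by case: Hne; apply/permP => v; rewrite perm1; move/negbFE/eqP: (H v).
  have Hvr : v != r by apply/eqP => E; move: Hv; rewrite E (autP (Hin _ Hx0)).1 eqxx.
  have Hd1 : 0 < depth v by case E: (depth v) => //; move: Hvr; rewrite (depth0 E) eqxx.
  pose c := iter (depth v).-1 parent v.
  have Hdc : depth c = 1 by rewrite depth_iter ?leq_pred //; lia.
  have Hcr : c != r by apply/eqP => E; move: Hdc; rewrite E depth_r.
  have Hpc : parent c = r by apply depth0; have := depth_par Hcr; rewrite Hdc; case.
  have Hc : is_child r parent c by rewrite /is_child Hcr Hpc eqxx.
  have Hvc : v \in subtree parent c.
    rewrite inE; apply/existsP.
    by exists (Ordinal (leq_ltn_trans (leq_pred _) (depth_lt v))); rewrite /= eqxx.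
  exists c; split => //.
  set S := subtree parent c.
  have Hsub y w : y \in G -> (phi y w \in S) = (w \in S).
    move=> Hy; rewrite /S -{1}(Hfix y c Hy Hc); exact: aut_sub (Hin y Hy).
  pose rho y : V -> V := fun w => if (y \in G) && (w \in S) then phi y w else w.
  have rho_inj y : injective (rho y).
    move=> w1 w2; rewrite /rho; case: (boolP (y \in G)) => Hy /=; last by [].
    case: (boolP (w1 \in S)) => H1; case: (boolP (w2 \in S)) => H2 //.
    * exact: perm_inj.
    * by move=> E; move: H2; rewrite -E (Hsub _ _ Hy) H1.
    * by move=> E; move: H1; rewrite E (Hsub _ _ Hy) H2.
  pose Rho y := perm (rho_inj y).
  have Hk : 0 < class_size r parent c by apply/card_gt0P; exists c; rewrite inE Hc iso_refl.
  pose Phi y : @wr_elt (perm_of V) (class_size r parent c) := ([ffun _ => Rho y], 1%g).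
  exists Phi; split.
  + move=> y Hy i; rewrite ffunE inE; apply/and3P; split.
    * by rewrite permE /rho Hy sub_self Hfix.
    * by apply/forallP => w; apply/implyP => Hw; rewrite permE /rho Hy (negbTE Hw).
    * apply/forallP => w; apply/implyP => Hw; apply/forallP => u; apply/implyP => Hu.
      by rewrite !permE /rho Hy Hw Hu (autP (Hin _ Hy)).2.
  + move=> y z Hy Hz; rewrite /wr_mul /=; congr (_, _); last by rewrite mulg1.
    apply/ffunP => i; rewrite !ffunE; apply/permP => w.
    rewrite permM !permE /rho groupM // Hy Hz /=.
    case: (boolP (w \in S)) => Hw /=; last by rewrite (negbTE Hw).
    by rewrite Hmor // permM (Hsub _ _ Hy) Hw.
  + exists x0 => //; move/(congr1 fst) => /= /ffunP /(_ (Ordinal Hk)).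
    rewrite !ffunE => /permP /(_ v); rewrite permE perm1 /rho Hx0 Hvc /=.
    by move/eqP; rewrite (negbTE Hv).
Qed.

End Tree.


Theorem mainTheorem13 (V : finType) (r : V) (parent : V -> V)
  (gT : finGroupType) (G : {group gT}) :
  is_rooted_tree r parent ->
  (exists c, is_child r parent c) ->
  representable G r parent ->
  exists c, is_child r parent c /\
    exists phi : gT -> @wr_elt (perm_of V) (class_size r parent c),
      nontrivial_hom_to_wreath G (subtree_aut parent c) phi.
Proof. move=> Ht; exact: main_sec. Qed.
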